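(* Let $C_\lambda$ be the power-divergence copula and let $\mathcal{Z}(C_\lambda)=\{(u_1,u_2)\in[0,1]^2: C_\lambda(u_1,u_2)=0\}$ be its zero set. (i) If $\lambda\le -1$, then $\mathcal{Z}(C_\lambda)=\{(u_1,0):u_1\in[0,1]\}\cup\{(0,u_2):u_2\in[0,1]\}$. (ii) If $\lambda>-1$, then $\mathcal{Z}(C_\lambda)$ has positive (Lebesgue) area. (iii) As $\lambda\to\infty$, the zero set tends to the triangle $T$ with vertices $(0,0),(0,1),(1,0)$, in the sense that every $(u_1,u_2)\in[0,1]^2$ with $u_1+u_2<1$ belongs to $\mathcal{Z}(C_\lambda)$ for all sufficiently large $\lambda$, and every $(u_1,u_2)\in[0,1]^2$ with $u_1+u_2>1$ does not belong to $\mathcal{Z}(C_\lambda)$ for all sufficiently large $\lambda$; the boundary curve $\phi_\lambda(u_1)+\phi_\lambda(u_2)=\phi_\lambda(0)$ converges to the line $u_1+u_2=1$.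
   Context: For $\lambda\in\mathbb{R}$ define $\phi_\lambda$ on $[0,\infty)$ by $\phi_\lambda(x)=\frac{1}{\lambda(\lambda+1)}(x^{\lambda+1}-x+\lambda(1-x))$ for $\lambda\neq-1,0$; $\phi_0(x)=1-x+x\log x$; $\phi_{-1}(x)=x-1-\log x$; values at $x=0$ are limits, so $\phi_\lambda(0)=1/(\lambda+1)$ for $\lambda>-1$ and $\phi_\lambda(0)=\infty$ for $\lambda\le-1$. On $[0,1]$, $\phi_\lambda$ is convex, strictly decreasing, $\phi_\lambda(1)=0$. The pseudoinverse is $\phi_\lambda^{[-1]}(t)=\phi_\lambda^{-1}(t)$ (inverse of $\phi_\lambda|_{[0,1]}$) for $0\le t<\phi_\lambda(0)$ and $0$ for $t\ge\phi_\lambda(0)$. The power-divergence (PD) copula is $C_\lambda(u_1,u_2)=\phi_\lambda^{[-1]}(\phi_\lambda(u_1)+\phi_\lambda(u_2))$, $u_1,u_2\in[0,1]$ (with $\phi_\lambda^{[-1]}(\infty)=0$). *)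

(* Defs.v *)
From HB Require Import structures.
From mathcomp Require Import all_boot all_order all_algebra.
From mathcomp Require Import all_classical all_reals all_analysis.
Set Implicit Arguments. Unset Strict Implicit. Unset Printing Implicit Defensive.
Import Order.TTheory GRing.Theory Num.Theory.
Local Open Scope classical_set_scope.
Local Open Scope ring_scope.

Section PD.
Variable R : realType.

Definition pd_phi (lam x : R) : \bar R :=
  if x == 0 then (if -1 < lam then ((lam + 1)^-1)%:E else +oo%E)
  else if lam == 0 then (1 - x + x * ln x)%:E
  else if lam == -1 then (x - 1 - ln x)%:E
  else ((lam * (lam + 1))^-1 * (x `^ (lam + 1) - x + lam * (1 - x)))%:E.

(* pseudoinverse: inverse of phi_lambda restricted to [0,1] for 0 <= t < phi_lambda(0),
   and 0 for t >= phi_lambda(0) (including t = +oo) *)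
Definition pd_phi_pinv (lam : R) (t : \bar R) : R :=
  if (t < pd_phi lam 0)%E then xget (0:R) [set x : R | 0 <= x <= 1 /\ pd_phi lam x = t] else 0.

Definition pd_copula (lam u1 u2 : R) : R :=
  pd_phi_pinv lam (pd_phi lam u1 + pd_phi lam u2)%E.

Definition pd_zero_set (lam : R) : set (R * R) :=
  [set p | 0 <= p.1 <= 1 /\ 0 <= p.2 <= 1 /\ pd_copula lam p.1 p.2 = 0].

Definition leb2 : set (R * R) -> \bar R :=
  ((@lebesgue_measure R) \x (@lebesgue_measure R))%E.

End PD.

(* Main.v *)
Require Import Defs.
From HB Require Import structures.
From mathcomp Require Import all_boot all_order all_algebra.
From mathcomp Require Import all_classical all_reals all_analysis.
From mathcomp Require Import ring lra.
From mathcomp Require Import measurable_realfun.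
Import Order.TTheory GRing.Theory Num.Theory.
Import numFieldNormedType.Exports.
Local Open Scope classical_set_scope.
Local Open Scope ring_scope.

Section Aux.
Variable R : realType.

Lemma wexp (w u v : R) : 0 <= w -> w <= 1 ->
  expR (w * u + (1 - w) * v) <= w * expR u + (1 - w) * expR v.
Proof.
move=> w0 w1.
have := @convex_expR R (Itv01 w0 w1) u v.
by rewrite !convRE /=.
Qed.

Lemma ln_le_sub1 (x : R) : 0 < x -> ln x <= x - 1.
Proof.
move=> x0; have := expR_ge1Dx (ln x); rewrite lnK ?posrE //; lra.
Qed.

Lemma bern (a x : R) : 0 < x ->
  ((a <= 0 \/ 1 <= a) -> 1 + a * (x - 1) <= x `^ a) /\
  (0 <= a <= 1 -> x `^ a <= 1 + a * (x - 1)).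
Proof.
move=> x0.
have pE b : x `^ b = expR (b * ln x) by rewrite /powR gt_eqF.
split.
- case=> ha.
  + have w0 : 0 <= (1 - a)^-1 by rewrite invr_ge0; lra.
    have w1 : (1 - a)^-1 <= 1 by rewrite invf_le1; lra.
    have := wexp _ (a * ln x) (ln x) w0 w1.
    have -> : (1 - a)^-1 * (a * ln x) + (1 - (1 - a)^-1) * ln x = 0.
      by field; lra.
    rewrite expR0 lnK ?posrE // -pE => h.
    have h1 : 1 - a != 0 by rewrite gt_eqF //; lra.
    have : (1 - a) * 1 <= (1 - a) * ((1 - a)^-1 * x `^ a + (1 - (1 - a)^-1) * x).
      by rewrite ler_pM2l //; lra.
    have -> : (1 - a) * ((1 - a)^-1 * x `^ a + (1 - (1 - a)^-1) * x) = x `^ a - a * x.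
      by field.
    lra.
  + have a0 : 0 < a by lra.
    have w0 : 0 <= a^-1 by rewrite invr_ge0; lra.
    have w1 : a^-1 <= 1 by rewrite invf_le1; lra.
    have := wexp _ (a * ln x) 0 w0 w1.
    have -> : a^-1 * (a * ln x) + (1 - a^-1) * 0 = ln x.
      by field; lra.
    rewrite expR0 lnK ?posrE // -pE => h.
    have : a * x <= a * (a^-1 * x `^ a + (1 - a^-1) * 1) by rewrite ler_pM2l.
    have -> : a * (a^-1 * x `^ a + (1 - a^-1) * 1) = x `^ a + a - 1 by field; lra.
    lra.
- move=> /andP[a0 a1].
  have := wexp _ (ln x) 0 a0 a1.
  rewrite mulr0 addr0 expR0 lnK ?posrE // -pE; lra.
Qed.

Lemma powR_cont (a x : R) : 0 < x -> {for x, continuous (fun y : R => y `^ a)}.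
Proof.
move=> x0.
apply: differentiable_continuous; apply/derivable1_diffP.
by apply: derivable_powR; rewrite in_itv /= x0.
Qed.

Definition F (lam : R) : R -> R :=
  if lam == 0 then fun x => 1 - x + x * ln x
  else if lam == -1 then fun x => x - 1 - ln x
  else fun x => (lam * (lam + 1))^-1 * (x `^ (lam + 1) - x + lam * (1 - x)).

Lemma Fgen (lam x : R) : lam != 0 -> lam != -1 ->
  F lam x = (lam * (lam + 1))^-1 * (x `^ (lam + 1) - x + lam * (1 - x)).
Proof. by rewrite /F => /negbTE -> /negbTE ->. Qed.

Lemma phiE (lam x : R) : x != 0 -> pd_phi lam x = (F lam x)%:E.
Proof. move=> hx; rewrite /pd_phi /F (negbTE hx); by case: (lam == 0); case: (lam == -1). Qed.

Lemma phi0E (lam : R) : -1 < lam -> pd_phi lam 0 = ((lam + 1)^-1)%:E.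
Proof. by rewrite /pd_phi eqxx => ->. Qed.

Lemma phi0_inf (lam : R) : lam <= -1 -> pd_phi lam 0 = +oo%E.
Proof. by rewrite /pd_phi eqxx ltNge => ->. Qed.

Lemma F0 (lam : R) : -1 < lam -> F lam 0 = (lam + 1)^-1.
Proof.
move=> hl; have [->|l0] := eqVneq lam 0.
  by rewrite /F eqxx /= mul0r subr0 addr0 add0r invr1.
have [l1|l1] := eqVneq lam (-1); first by move: hl; rewrite l1 ltxx.
have a0 : lam + 1 != 0 by rewrite addr_eq0.
rewrite Fgen // powR0 //.
by field; apply/andP; split.
Qed.

Lemma phiF (lam x : R) : -1 < lam -> pd_phi lam x = (F lam x)%:E.
Proof.
move=> hl; have [->|hx] := eqVneq x 0; last exact: phiE.
by rewrite phi0E // F0.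
Qed.

Lemma F1 (lam : R) : F lam 1 = 0.
Proof.
have [->|l0] := eqVneq lam 0; first by rewrite /F eqxx /= ln1 subrr mulr0 addr0.
have [l1|l1] := eqVneq lam (-1).
  rewrite /F (negbTE l0) l1 eqxx /= ln1; lra.
by rewrite Fgen // powR1 !subrr mulr0 addr0 mulr0.
Qed.

Lemma F_ge0 (lam x : R) : 0 < x -> 0 <= F lam x.
Proof.
move=> x0; rewrite /F.
have hl := ln_le_sub1 _ x0.
have hi : ln (x^-1) <= x^-1 - 1 by apply: ln_le_sub1; rewrite invr_gt0.
rewrite lnV ?posrE // in hi.
case: ifP => _.
  have : x * (- ln x) <= x * (x^-1 - 1) by rewrite ler_pM2l.
  rewrite mulrBr mulfV ?gt_eqF // mulr1; lra.
case: ifP => _; first lra.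
have [a B] := bern (lam + 1) _ x0.
have E : x `^ (lam + 1) - x + lam * (1 - x) = x `^ (lam + 1) - (1 + (lam + 1) * (x - 1)).
  by ring.
rewrite E.
have [hlo|hhi] := leP lam (-1).
  apply: mulr_ge0; last by rewrite subr_ge0; apply: a; left; lra.
  rewrite invr_ge0; nra.
have [hlo2|hhi2] := leP lam 0.
  apply: mulr_le0; first by rewrite invr_le0; nra.
  rewrite subr_le0; apply: B; apply/andP; split; lra.
apply: mulr_ge0; first by rewrite invr_ge0; nra.
by rewrite subr_ge0; apply: a; right; lra.
Qed.

Lemma F_cont (lam x : R) : 0 < x -> {for x, continuous (F lam)}.
Proof.
move=> x0; rewrite /F.
case: ifP => _.
  apply: cvgD; first apply: cvgB; [exact: cvg_cst| exact: cvg_id|].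
  apply: cvgM; [exact: cvg_id| exact: continuous_ln].
case: ifP => _.
  apply: cvgB; last exact: continuous_ln.
  apply: cvgB; [exact: cvg_id| exact: cvg_cst].
apply: cvgM; first exact: cvg_cst.
apply: cvgD; first apply: cvgB; [exact: powR_cont| exact: cvg_id|].
apply: cvgM; first exact: cvg_cst.
apply: cvgB; [exact: cvg_cst| exact: cvg_id].
Qed.


Lemma pinv_ge (lam : R) (t : \bar R) : (pd_phi lam 0 <= t)%E -> pd_phi_pinv lam t = 0.
Proof. by rewrite /pd_phi_pinv leNgt => /negbTE ->. Qed.

Lemma pinv_ne0 (lam t x0 : R) : 0 <= t -> (t%:E < pd_phi lam 0)%E -> 0 < x0 <= 1 ->
  t <= F lam x0 -> pd_phi_pinv lam t%:E != 0.
Proof.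
move=> t0 tlt /andP[x00 x01] tF.
have [c cI Fc] : exists2 c, c \in `[x0, 1] & F lam c = t.
  apply: IVT => //.
  - apply: continuous_in_subspaceT => y; rewrite inE /= in_itv /= => /andP[y0 _].
    by apply: F_cont; apply: lt_le_trans y0.
  - by rewrite F1 ge_min le_max tF t0 orbT /=.

move: cI; rewrite in_itv /= => /andP[c0 c1].
rewrite /pd_phi_pinv tlt.
set P := [set x : R | _].
have : P (xget 0 P).
  apply: xgetPex; exists c; split; first by apply/andP; split => //; apply: ltW; apply: lt_le_trans c0.
  by rewrite phiE ?Fc // gt_eqF //; apply: lt_le_trans c0.
move=> [_ hP]; apply/eqP => h; rewrite h in hP; rewrite -hP in tlt.
by rewrite ltxx in tlt.
Qed.

Lemma big_F (lam t : R) : lam <= -1 -> 0 <= t -> exists x0, (0 < x0 <= 1) /\ t <= F lam x0.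
Proof.
move=> hl t0.
have l0 : lam != 0 by rewrite lt_eqF //; lra.
have [l1|l1] := eqVneq lam (-1).
  exists (expR (- (t + 1))); split.
    by rewrite expR_gt0 /= expR_le1; lra.
  rewrite /F (negbTE l0) l1 eqxx /= expRK.
  have := expR_gt0 (- (t + 1)); lra.
set a := lam + 1.
have a0 : a < 0 by rewrite /a; rewrite lt_neqAle in l1 *; lra.
set M := t * (lam * a) + 2 - lam.
have K0 : 0 < lam * a by nra.
have M1 : 1 <= M by rewrite /M; nra.
exists (M `^ a^-1); split.
  rewrite powR_gt0 /=; last lra.
  rewrite -(powRr0 M); apply: ler_powR => //.
  by rewrite invr_le0; lra.
rewrite Fgen //.
have -> : (M `^ a^-1) `^ (lam + 1) = M.
  by rewrite -powRrM mulVf ?lt_eqF // powRr1 //; lra.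
have xg : 0 <= M `^ a^-1 by apply: powR_ge0.
have -> : M - M `^ a^-1 + lam * (1 - M `^ a^-1) = (t * (lam * a) + 2) - a * M `^ a^-1.
  by rewrite /M /a; ring.
rewrite -/a ler_pdivlMl //.
have : 0 <= - a * M `^ a^-1 by nra.
lra.
Qed.


Lemma Fdiff (lam x : R) : lam != 0 -> -1 < lam ->
  F lam x - F lam 0 = (x `^ (lam + 1) - (lam + 1) * x) / (lam * (lam + 1)).
Proof.
move=> l0 hl; have l1 : lam != -1 by rewrite gt_eqF.
have a0 : lam + 1 != 0 by rewrite gt_eqF //; lra.
rewrite F0 // Fgen //; field; apply/andP; split => //.
Qed.

Lemma near0 (lam e : R) : -1 < lam -> 0 < e ->
  exists d, (0 < d <= 1) /\ forall x, 0 <= x <= d -> F lam 0 - e <= F lam x.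
Proof.
move=> hl e0.
have [l0|l0] := eqVneq lam 0.
  exists (Num.min 1 (e * e / 4)); split.
    rewrite lt_min ltr01 /= ge_min lexx /= andbT; apply: divr_gt0; [nra|lra].
  move=> x /andP[x0 xd].
  have xd2 : x <= e * e / 4 by move: xd; rewrite le_min => /andP[].
  rewrite F0 // l0 add0r invr1.
  have [->|xn0] := eqVneq x 0; first by rewrite F0 // add0r invr1; lra.
  have xp : 0 < x by rewrite lt_neqAle eq_sym xn0.
  set s := Num.sqrt x.
  have sp : 0 < s by rewrite sqrtr_gt0.
  have ss : s * s = x by rewrite -expr2 sqr_sqrtr // ltW.
  have lnx : ln x = ln s + ln s by rewrite -ss lnM.
  have hi : ln (s^-1) <= s^-1 - 1 by apply: ln_le_sub1; rewrite invr_gt0.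
  rewrite lnV ?posrE // in hi.
  have h2 : x * ln x >= 2 * x - 2 * s.
    have : x * (- ln s) <= x * (s^-1 - 1) by rewrite ler_pM2l.
    have e1 : x * s^-1 = s by rewrite -ss mulrK // unitfE gt_eqF.
    rewrite mulrBr mulr1 e1 lnx; lra.
  have se : s <= e / 2 by nra.
  rewrite /F eqxx /=; nra.
have a0 : 0 < lam + 1 by lra.
have [lp|ln] := ltP 0 lam.
  exists (Num.min 1 (e * lam)); split.
    by rewrite lt_min ltr01 /= ge_min lexx /= mulr_gt0.
  move=> x /andP[x0 xd].
  have xd2 : x <= e * lam by move: xd; rewrite le_min => /andP[].
  have := Fdiff lam x l0 hl.
  have K : 0 < lam * (lam + 1) by rewrite mulr_gt0.
  have pg := @powR_ge0 R x (lam + 1).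
  have : (- ((lam + 1) * x)) / (lam * (lam + 1)) <= (x `^ (lam + 1) - (lam + 1) * x) / (lam * (lam + 1)).
    by rewrite ler_pM2r ?invr_gt0 //; lra.
  have -> : (- ((lam + 1) * x)) / (lam * (lam + 1)) = - (x / lam).
    by field; apply/andP; split; rewrite gt_eqF.
  have : x / lam <= e by rewrite ler_pdivrMr.
  lra.
have lneg : lam < 0 by rewrite lt_neqAle l0.
set a := lam + 1.
have K : 0 < - (lam * a) by rewrite /a; nra.
set c := e * (- (lam * a)).
have c0 : 0 < c by rewrite mulr_gt0.
exists (Num.min 1 (c `^ a^-1)); split.
  by rewrite lt_min ltr01 /= ge_min lexx /= powR_gt0.
move=> x /andP[x0 xd].
have xd2 : x <= c `^ a^-1 by move: xd; rewrite le_min => /andP[].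
have pc : x `^ a <= c.
  have -> : c = (c `^ a^-1) `^ a by rewrite -powRrM mulVf ?gt_eqF // powRr1 // ltW.
  apply: ge0_ler_powR; rewrite ?nnegrE ?powR_ge0 //; exact: ltW.
have := Fdiff lam x l0 hl; rewrite -/a => hd.
have a0' : 0 < a by [].
have hneg : (a * x) / (lam * a) <= 0.
  apply: mulr_ge0_le0; first by apply: mulr_ge0; lra.
  by rewrite invr_le0; lra.
have eq1 : (x `^ a - a * x) / (lam * a) = x `^ a / (lam * a) - (a * x) / (lam * a).
  by rewrite mulrBl.
have eq2 : x `^ a / (lam * a) = - (x `^ a / (- (lam * a))) by rewrite invrN mulrN opprK.
have : x `^ a / (- (lam * a)) <= e by rewrite ler_pdivrMr.
lra.
Qed.

Lemma exists_x0 (lam t : R) : -1 < lam -> t < F lam 0 ->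
  exists x0, (0 < x0 <= 1) /\ t <= F lam x0.
Proof.
move=> hl ht.
have ep : 0 < F lam 0 - t by rewrite subr_gt0.
have [d [/andP[d0 d1] hd]] := near0 lam _ hl ep.
exists d; split; first by rewrite d0.
have := hd d; rewrite lexx ltW //= => /(_ isT); lra.
Qed.

Lemma F_meas (lam : R) : measurable_fun setT (F lam).
Proof.
rewrite /F; case: ifP => _; [|case: ifP => _].
- apply: measurable_funD; first apply: measurable_funB => //.
  by apply: measurable_funM => //; exact: measurable_ln.
- apply: measurable_funB; last exact: measurable_ln.
  by apply: measurable_funB.
- apply: measurable_funM => //.
  apply: measurable_funD.
    by apply: measurable_funB => //; exact: measurable_powR.
  by apply: measurable_funM => //; exact: measurable_funB.
Qed.

Lemma G_meas (lam : R) : measurable_fun setT (fun p : R * R => F lam p.1 + F lam p.2).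
Proof.
apply: measurable_funD.
  exact: measurableT_comp (F_meas lam) measurable_fst.
exact: measurableT_comp (F_meas lam) measurable_snd.
Qed.


Lemma phi_neqNy (lam x : R) : pd_phi lam x != -oo%E.
Proof.
rewrite /pd_phi; case: (x == 0); first by case: (-1 < lam).
by case: (lam == 0); case: (lam == -1).
Qed.

Lemma F_ge0' (lam x : R) : -1 < lam -> 0 <= x -> 0 <= F lam x.
Proof.
move=> hl x0; have [->|xn] := eqVneq x 0.
  by rewrite F0 // invr_ge0; lra.
by apply: F_ge0; rewrite lt_neqAle eq_sym xn.
Qed.

Lemma part1 (lam : R) : lam <= -1 ->
  pd_zero_set lam =
  [set p | 0 <= p.1 <= 1 /\ p.2 = 0] `|` [set p | p.1 = 0 /\ 0 <= p.2 <= 1].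
Proof.
move=> hl; apply/seteqP; split => -[u1 u2] /=.
- move=> [/andP[h10 h11] [/andP[h20 h21] hz]].
  have [u10|u1n] := eqVneq u1 0; first by right; split; rewrite ?h20 ?h21.
  have [u20|u2n] := eqVneq u2 0; first by left; split; rewrite ?h10 ?h11.
  exfalso.
  have p1 : 0 < u1 by rewrite lt_neqAle eq_sym u1n.
  have p2 : 0 < u2 by rewrite lt_neqAle eq_sym u2n.
  move: hz; rewrite /= /pd_copula !phiE // -EFinD => hz.
  have t0 : 0 <= F lam u1 + F lam u2 by apply: addr_ge0; apply: F_ge0.
  have [x0 [hx0 hF]] := big_F lam _ hl t0.
  have tlt : ((F lam u1 + F lam u2)%:E < pd_phi lam 0)%E by rewrite phi0_inf // ltry.
  by have /eqP/(_ hz) := pinv_ne0 lam _ _ t0 tlt hx0 hF.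
- case=> [[h1 ->]|[-> h2]]; repeat split => //. all: try (by rewrite /= lexx ler01).
  all: rewrite /= /pd_copula; apply: pinv_ge; rewrite phi0_inf // ?addey ?addye ?phi_neqNy //.
Qed.

Lemma zs_char (lam : R) : -1 < lam ->
  pd_zero_set lam =
  [set p | (0 <= p.1 <= 1) /\ (0 <= p.2 <= 1) /\ F lam 0 <= F lam p.1 + F lam p.2].
Proof.
move=> hl; apply/seteqP; split => -[u1 u2] /= [h1 [h2 h3]]; split => //; split => //.
- move: h3; rewrite /= /pd_copula !phiF // -EFinD => h3.
  rewrite leNgt; apply/negP => lt.
  have t0 : 0 <= F lam u1 + F lam u2.
    by apply: addr_ge0; apply: F_ge0' => //; [case/andP: h1|case/andP: h2].
  have [x0 [hx0 hF]] := exists_x0 lam _ hl lt.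
  have tlt : ((F lam u1 + F lam u2)%:E < pd_phi lam 0)%E by rewrite phiF // lte_fin.
  by have /eqP/(_ h3) := pinv_ne0 lam _ _ t0 tlt hx0 hF.
- by rewrite /pd_copula !phiF // -EFinD; apply: pinv_ge; rewrite phiF // lee_fin.
Qed.


Lemma part2 (lam : R) : -1 < lam ->
  measurable (pd_zero_set lam) /\ (0 < @leb2 R (pd_zero_set lam))%E.
Proof.
move=> hl; rewrite zs_char //.
have mS : measurable [set p : R * R | (0 <= p.1 <= 1) /\ (0 <= p.2 <= 1) /\
     F lam 0 <= F lam p.1 + F lam p.2].
  have -> : [set p : R * R | (0 <= p.1 <= 1) /\ (0 <= p.2 <= 1) /\
     F lam 0 <= F lam p.1 + F lam p.2] =
     (`[0, 1]%classic `*` `[0, 1]%classic) `&`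
     (setT `&` (fun p : R * R => F lam p.1 + F lam p.2) @^-1` `[F lam 0, +oo[%classic).
    apply/seteqP; split => -[u1 u2] /=; rewrite !in_itv /= andbT.
      by move=> [h1 [h2 h3]].
    by move=> [[h1 h2] [_ h3]].
  apply: measurableI; first by apply: measurableX; exact: measurable_itv.
  by apply: G_meas => //; exact: measurable_itv.
split => //.
have F0p : 0 < F lam 0 by rewrite F0 // invr_gt0; lra.
have e0 : 0 < F lam 0 / 2 by rewrite divr_gt0.
have [d [/andP[d0 d1] hd]] := near0 lam _ hl e0.
have sub : (`[0, d]%classic `*` `[0, d]%classic) `<=`
  [set p : R * R | (0 <= p.1 <= 1) /\ (0 <= p.2 <= 1) /\ F lam 0 <= F lam p.1 + F lam p.2].
  move=> -[u1 u2] /=; rewrite !in_itv /= => -[/andP[a1 b1] /andP[a2 b2]].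
  have h1 := hd u1; have h2 := hd u2.
  rewrite a1 b1 a2 b2 /= in h1 h2.
  have := h1 isT; have := h2 isT.
  split; first by rewrite a1 /=; lra.
  split; first by rewrite a2 /=; lra.
  lra.
apply: (@lt_le_trans _ _ (leb2 (`[0, d]%classic `*` `[0, d]%classic))).
  rewrite /leb2 product_measure1E; try exact: measurable_itv.
  have L : @lebesgue_measure R `[0%R, d]%classic = d%:E.
    by rewrite lebesgue_measure_itv /= lte_fin d0 -EFinD subr0.
  have H (x y : \bar R) : x = d%:E -> y = d%:E -> (0 < x * y)%E.
    by move=> -> ->; rewrite -EFinM lte_fin; exact: mulr_gt0.
  by apply: H; exact: L.
rewrite /leb2; apply: le_measure => //; rewrite inE //.
by apply: measurableX; exact: measurable_itv.
Qed.


Lemma sumF (lam u1 u2 : R) : 0 < lam ->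
  F lam u1 + F lam u2 - F lam 0 =
  (u1 `^ (lam + 1) + u2 `^ (lam + 1) + lam - (lam + 1) * (u1 + u2)) / (lam * (lam + 1)).
Proof.
move=> lp; have l0 : lam != 0 by rewrite gt_eqF.
have l1 : lam != -1 by rewrite gt_eqF //; lra.
have a0 : lam + 1 != 0 by rewrite gt_eqF //; lra.
rewrite F0; last lra.
rewrite !Fgen //; field; apply/andP; split => //.
Qed.

Lemma powR_le1 (u b : R) : 0 <= u <= 1 -> 0 <= b -> u `^ b <= 1.
Proof.
move=> /andP[u0 u1] b0; rewrite /powR; case: ifP => _.
  by case: (b == 0) => //=; rewrite ler01.
rewrite expR_le1; apply: mulr_ge0_le0 => //; exact: ln_le0.
Qed.

Lemma powR_lex (u b : R) : 0 <= u <= 1 -> 1 <= b -> u `^ b <= u.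
Proof.
move=> /andP[u0 u1] b1; have [->|un] := eqVneq u 0.
  by rewrite powR0 // gt_eqF //; lra.
apply: ge1r_powR => //; rewrite u1 andbT lt_neqAle eq_sym un u0 //.
Qed.

Lemma F_le_F0 (lam x : R) : 0 < lam -> 0 <= x <= 1 -> F lam x <= F lam 0.
Proof.
move=> lp hx; rewrite -subr_le0 Fdiff; [|by rewrite gt_eqF|lra].
have h := powR_lex x (lam + 1) hx ltac:(lra).
apply: mulr_le0_ge0; last by rewrite invr_ge0; apply: mulr_ge0; lra.
case/andP: hx => x0 x1; nra.
Qed.

Lemma part3a (u1 u2 : R) : 0 <= u1 <= 1 -> 0 <= u2 <= 1 -> u1 + u2 < 1 ->
  exists L : R, forall lam : R, L < lam -> pd_zero_set lam (u1, u2).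
Proof.
move=> h1 h2 hs.
have s1 : 0 < 1 - (u1 + u2) by lra.
exists (Num.max 1 ((u1 + u2) / (1 - (u1 + u2)))) => lam; rewrite gt_max => /andP[l1 l2].
rewrite ltr_pdivrMr // in l2.
have lp : 0 < lam by lra.
rewrite /pd_zero_set /=; split => //; split => //.
rewrite /pd_copula !phiF; try lra.
rewrite -EFinD; apply: pinv_ge; rewrite phiF ?lee_fin; last lra.
rewrite -subr_ge0 sumF //; apply: divr_ge0; last by apply: mulr_ge0; lra.
have := @powR_ge0 R u1 (lam + 1); have := @powR_ge0 R u2 (lam + 1); nra.
Qed.

Lemma part3b (u1 u2 : R) : 0 <= u1 <= 1 -> 0 <= u2 <= 1 -> 1 < u1 + u2 ->
  exists L : R, forall lam : R, L < lam -> ~ pd_zero_set lam (u1, u2).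
Proof.
move=> h1 h2 hs.
have s1 : 0 < (u1 + u2) - 1 by lra.
exists (Num.max 1 ((2 - (u1 + u2)) / ((u1 + u2) - 1))) => lam; rewrite gt_max => /andP[l1 l2].
rewrite ltr_pdivrMr // in l2.
have lp : 0 < lam by lra.
rewrite /pd_zero_set /= => -[_ [_ hz]].
move: hz; rewrite /pd_copula !phiF; try lra.
rewrite -EFinD => hz.
have t0 : 0 <= F lam u1 + F lam u2.
  by move: h1 h2 => /andP[a1 _] /andP[a2 _]; apply: addr_ge0; apply: F_ge0'; lra.
have lt : F lam u1 + F lam u2 < F lam 0.
  rewrite -subr_lt0 sumF // ltr_pdivrMr ?mul0r; last by apply: mulr_gt0; lra.
  have := powR_le1 u1 (lam + 1) h1 ltac:(lra).
  have := powR_le1 u2 (lam + 1) h2 ltac:(lra).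
  nra.
have hl : -1 < lam by lra.
have [x0 [hx0 hF]] := exists_x0 lam _ hl lt.
have tlt : ((F lam u1 + F lam u2)%:E < pd_phi lam 0)%E by rewrite phiF // lte_fin.
by have /eqP/(_ hz) := pinv_ne0 lam _ _ t0 tlt hx0 hF.
Qed.

Lemma bd_a (lam eps u1 u2 : R) : 0 < eps -> Num.max 1 (4 / eps) < lam ->
  0 <= u1 <= 1 -> 0 <= u2 <= 1 -> F lam u1 + F lam u2 = F lam 0 ->
  `|u1 + u2 - 1| < eps.
Proof.
move=> e0; rewrite gt_max => /andP[l1 l2] h1 h2 hE.
rewrite ltr_pdivrMr // in l2.
have lp : 0 < lam by lra.
have K : 0 < lam * (lam + 1) by apply: mulr_gt0; lra.
have := sumF lam u1 u2 lp; rewrite hE subrr => /esym /eqP.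
rewrite mulf_eq0 invr_eq0 (gt_eqF K) orbF => /eqP hN.
have := powR_le1 u1 (lam + 1) h1 ltac:(lra).
have := powR_le1 u2 (lam + 1) h2 ltac:(lra).
have := @powR_ge0 R u1 (lam + 1); have := @powR_ge0 R u2 (lam + 1).
move: h1 h2 => /andP[a1 b1] /andP[a2 b2].
move=> q1 q2 q3 q4.
rewrite ltr_norml; apply/andP; split; nra.
Qed.

Lemma part3c (eps : R) : 0 < eps -> exists L : R, forall lam : R, L < lam ->
     (forall u1 u2 : R, 0 <= u1 <= 1 -> 0 <= u2 <= 1 ->
        (pd_phi lam u1 + pd_phi lam u2 = pd_phi lam 0)%E -> `|u1 + u2 - 1| < eps)
     /\
     (forall u1 : R, 0 <= u1 <= 1 -> exists u2 : R, 0 <= u2 <= 1 /\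
        (pd_phi lam u1 + pd_phi lam u2 = pd_phi lam 0)%E /\ `|u1 + u2 - 1| < eps).
Proof.
move=> e0; exists (Num.max 1 (4 / eps)) => lam hL.
have lp : 0 < lam by move: hL; rewrite gt_max => /andP[]; lra.
have hl : -1 < lam by lra.
split.
  move=> u1 u2 h1 h2; rewrite !phiF // -EFinD => -[hE].
  exact: (bd_a lam eps u1 u2 e0 hL h1 h2 hE).
move=> u1 h1.
have h0 : 0 <= (0:R) <= 1 by apply/andP; split; lra.
have [Fz|Fnz] := eqVneq (F lam u1) 0.
  have hE : F lam u1 + F lam 0 = F lam 0 by rewrite Fz add0r.
  exists 0; split => //; split; first by rewrite !phiF // -EFinD hE.
  exact: (bd_a lam eps u1 0 e0 hL h1 h0 hE).
have Fp : 0 < F lam u1.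
  by rewrite lt_neqAle eq_sym Fnz F_ge0' //; case/andP: h1.
have lt : F lam 0 - F lam u1 < F lam 0 by lra.
have [x0 [/andP[x00 x01] hF]] := exists_x0 lam _ hl lt.
have [c cI Fc] : exists2 c, c \in `[x0, 1] & F lam u1 + F lam c = F lam 0.
  apply: (@IVT R (fun y => F lam u1 + F lam y)) => //.
  - apply: continuous_in_subspaceT => y; rewrite inE /= in_itv /= => /andP[y0 _].
    apply: cvgD; first exact: cvg_cst.
    by apply: F_cont; apply: lt_le_trans y0.
  - rewrite F1 addr0 ge_min le_max.
    have := F_le_F0 lam u1 lp h1.
    move=> hh; apply/andP; split; apply/orP; [right|left]; lra.
move: cI; rewrite in_itv /= => /andP[c0 c1].
have hc : 0 <= c <= 1 by rewrite c1 andbT; apply: le_trans c0; lra.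
exists c; split => //; split; first by rewrite !phiF // -EFinD Fc.
exact: (bd_a lam eps u1 c e0 hL h1 hc Fc).
Qed.

End Aux.
Theorem theorem1 (R : realType) :
  (* (i) *)
  (forall lam : R, lam <= -1 ->
     pd_zero_set lam =
       [set p | 0 <= p.1 <= 1 /\ p.2 = 0] `|` [set p | p.1 = 0 /\ 0 <= p.2 <= 1])
  /\
  (* (ii) *)
  (forall lam : R, -1 < lam ->
     measurable (pd_zero_set lam) /\ (0 < @leb2 R (pd_zero_set lam))%E)
  /\
  (* (iii) pointwise convergence of the zero set to the triangle *)
  (forall u1 u2 : R, 0 <= u1 <= 1 -> 0 <= u2 <= 1 -> u1 + u2 < 1 ->
     exists L : R, forall lam : R, L < lam -> pd_zero_set lam (u1, u2))
  /\
  (forall u1 u2 : R, 0 <= u1 <= 1 -> 0 <= u2 <= 1 -> 1 < u1 + u2 ->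
     exists L : R, forall lam : R, L < lam -> ~ pd_zero_set lam (u1, u2))
  /\
  (* (iii) the boundary curve phi(u1) + phi(u2) = phi(0) in [0,1]^2 converges
     (in Hausdorff distance) to the segment u1 + u2 = 1 *)
  (forall eps : R, 0 < eps -> exists L : R, forall lam : R, L < lam ->
     (forall u1 u2 : R, 0 <= u1 <= 1 -> 0 <= u2 <= 1 ->
        (pd_phi lam u1 + pd_phi lam u2 = pd_phi lam 0)%E -> `|u1 + u2 - 1| < eps)
     /\
     (forall u1 : R, 0 <= u1 <= 1 -> exists u2 : R, 0 <= u2 <= 1 /\
        (pd_phi lam u1 + pd_phi lam u2 = pd_phi lam 0)%E /\ `|u1 + u2 - 1| < eps)).
Proof.
split; first exact: (@part1 R).
split; first exact: (@part2 R).
split; first exact: (@part3a R).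
split; first exact: (@part3b R).
exact: (@part3c R).
Qed.
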